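(* (1) Let $\mathcal X\subseteq\mathcal C$ be a covariantly finite subcategory closed under extensions and direct summands, and put $\mathcal Y={}^{\perp_1}\mathcal X$. Then for every $C\in\mathcal C$ there is an $\mathbb E$-triangle $X\xrightarrow{x}Y\xrightarrow{y}C\overset{\delta}{\dashrightarrow}$ with $X\in\mathcal X$, $Y\in\mathcal Y$, and $y:Y\to C$ a right $\mathcal Y$-approximation of $C$. (2) Let $\mathcal Y\subseteq\mathcal C$ be a contravariantly finite subcategory closed under extensions and direct summands, and put $\mathcal X=\mathcal Y^{\perp_1}$. Then for every $C\in\mathcal C$ there is an $\mathbb E$-triangle $C\xrightarrow{x}X\xrightarrow{y}Y\overset{\delta}{\dashrightarrow}$ with $X\in\mathcal X$, $Y\in\mathcal Y$, and $x:C\to X$ a left $\mathcal X$-approximation of $C$.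
   Context: $(\mathcal C,\mathbb E,\mathfrak s)$ is an extriangulated category in the sense of Nakaoka–Palu, whose underlying additive category is Krull–Schmidt, and which has enough projectives and enough injectives (projective $P$: $\mathbb E(P,-)=0$; injective $I$: $\mathbb E(-,I)=0$). All subcategories are full additive subcategories closed under isomorphisms. A subcategory is closed under extensions if for every $\mathbb E$-triangle $A\to B\to C\dashrightarrow$ with $A,C$ in it, $B$ is in it. For a subcategory $\mathcal X$, ${}^{\perp_1}\mathcal X=\{Y\in\mathcal C:\mathbb E(Y,X)=0\ \forall X\in\mathcal X\}$ and $\mathcal X^{\perp_1}=\{Y\in\mathcal C:\mathbb E(X,Y)=0\ \forall X\in\mathcal X\}$. *)

(* Defs.v *)
From HB Require Import structures.
From mathcomp Require Import all_boot all_algebra.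
Set Implicit Arguments.
Unset Strict Implicit.
Unset Printing Implicit Defensive.
Import GRing.Theory.
Local Open Scope ring_scope.

Record PreAdd := {
  Ob :> Type;
  Mor : Ob -> Ob -> zmodType;
  comp : forall {A B C : Ob}, Mor B C -> Mor A B -> Mor A C;
  idm : forall (A : Ob), Mor A A;
  comp_assoc : forall (A B C D : Ob) (h : Mor C D) (g : Mor B C) (f : Mor A B),
      comp h (comp g f) = comp (comp h g) f;
  comp_id_l : forall (A B : Ob) (f : Mor A B), comp (idm B) f = f;
  comp_id_r : forall (A B : Ob) (f : Mor A B), comp f (idm A) = f;
  comp_addl : forall (A B C : Ob) (g1 g2 : Mor B C) (f : Mor A B),
      comp (g1 + g2) f = comp g1 f + comp g2 f;
  comp_addr : forall (A B C : Ob) (g : Mor B C) (f1 f2 : Mor A B),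
      comp g (f1 + f2) = comp g f1 + comp g f2
}.
Arguments comp {p A B C}.
Arguments idm {p}.

Section Basic.
Variable C : PreAdd.

Definition isIso (A B : C) (f : Mor A B) : Prop :=
  exists g : Mor B A, comp g f = idm A /\ comp f g = idm B.

Definition isZeroObj (Z : C) : Prop := idm Z = 0.

Definition isBiprod (A1 A2 S : C) (i1 : Mor A1 S) (i2 : Mor A2 S)
    (p1 : Mor S A1) (p2 : Mor S A2) : Prop :=
  [/\ comp p1 i1 = idm A1, comp p2 i2 = idm A2, comp p1 i2 = 0,
      comp p2 i1 = 0 & comp i1 p1 + comp i2 p2 = idm S].

Definition additive : Prop :=
  (exists Z : C, isZeroObj Z) /\
  (forall A1 A2 : C, exists (S : C) (i1 : Mor A1 S) (i2 : Mor A2 S)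
      (p1 : Mor S A1) (p2 : Mor S A2), isBiprod i1 i2 p1 p2).

Definition localEnd (A : C) : Prop :=
  idm A <> 0 /\ forall f : Mor A A, isIso f \/ isIso (idm A - f).

Definition KrullSchmidt : Prop :=
  forall A : C, exists (n : nat) (L : 'I_n -> C)
    (i : forall k, Mor (L k) A) (p : forall k, Mor A (L k)),
    [/\ forall k, localEnd (L k),
        forall k, comp (p k) (i k) = idm (L k),
        forall j k, j != k -> comp (p j) (i k) = 0
      & \sum_(k < n) comp (i k) (p k) = idm A].
End Basic.

(* Extriangulated categories.  E C A is the group E(C,A);
   pushE a = a_* (covariant in A), pullE c = c^* (contravariant in C).
   real d x y  means  s(d) = [A --x--> B --y--> C]. *)
Record ExtriCat := {
  cat :> PreAdd;
  cat_additive : additive cat;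
  E : cat -> cat -> zmodType;
  pushE : forall {A A' Cc : cat}, Mor A A' -> E Cc A -> E Cc A';
  pullE : forall {A Cc Cc' : cat}, Mor Cc' Cc -> E Cc A -> E Cc' A;
  pushE_add : forall (A A' Cc : cat) (a : Mor A A') (d1 d2 : E Cc A),
      pushE a (d1 + d2) = pushE a d1 + pushE a d2;
  pushE_addm : forall (A A' Cc : cat) (a1 a2 : Mor A A') (d : E Cc A),
      pushE (a1 + a2) d = pushE a1 d + pushE a2 d;
  pushE_id : forall (A Cc : cat) (d : E Cc A), pushE (idm A) d = d;
  pushE_comp : forall (A A' A'' Cc : cat) (b : Mor A' A'') (a : Mor A A')
      (d : E Cc A), pushE (comp b a) d = pushE b (pushE a d);
  pullE_add : forall (A Cc Cc' : cat) (c : Mor Cc' Cc) (d1 d2 : E Cc A),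
      pullE c (d1 + d2) = pullE c d1 + pullE c d2;
  pullE_addm : forall (A Cc Cc' : cat) (c1 c2 : Mor Cc' Cc) (d : E Cc A),
      pullE (c1 + c2) d = pullE c1 d + pullE c2 d;
  pullE_id : forall (A Cc : cat) (d : E Cc A), pullE (idm Cc) d = d;
  pullE_comp : forall (A Cc Cc' Cc'' : cat) (c : Mor Cc' Cc) (c' : Mor Cc'' Cc')
      (d : E Cc A), pullE (comp c c') d = pullE c' (pullE c d);
  push_pullE : forall (A A' Cc Cc' : cat) (a : Mor A A') (c : Mor Cc' Cc)
      (d : E Cc A), pushE a (pullE c d) = pullE c (pushE a d);
  real : forall {A B Cc : cat}, E Cc A -> Mor A B -> Mor B Cc -> Prop;
  real_ex : forall (A Cc : cat) (d : E Cc A),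
      exists (B : cat) (x : Mor A B) (y : Mor B Cc), real d x y;
  (* s(d) is exactly one equivalence class of sequences *)
  real_equiv : forall (A B B' Cc : cat) (d : E Cc A)
      (x : Mor A B) (y : Mor B Cc) (x' : Mor A B') (y' : Mor B' Cc),
      real d x y ->
      (real d x' y' <->
       exists b : Mor B B', isIso b /\ comp b x = x' /\ comp y' b = y);
  real_morph : forall (A B Cc A' B' Cc' : cat) (d : E Cc A) (d' : E Cc' A')
      (x : Mor A B) (y : Mor B Cc) (x' : Mor A' B') (y' : Mor B' Cc')
      (a : Mor A A') (c : Mor Cc Cc'),
      real d x y -> real d' x' y' -> pushE a d = pullE c d' ->
      exists b : Mor B B', comp b x = comp x' a /\ comp y' b = comp c y;
  real_zero : forall (A Cc S : cat) (i1 : Mor A S) (i2 : Mor Cc S)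
      (p1 : Mor S A) (p2 : Mor S Cc),
      isBiprod i1 i2 p1 p2 -> real (0 : E Cc A) i1 p2;
  real_sum : forall (A A' B B' Cc Cc' SA SB SC : cat)
      (iA : Mor A SA) (iA' : Mor A' SA) (pA : Mor SA A) (pA' : Mor SA A')
      (iB : Mor B SB) (iB' : Mor B' SB) (pB : Mor SB B) (pB' : Mor SB B')
      (iC : Mor Cc SC) (iC' : Mor Cc' SC) (pC : Mor SC Cc) (pC' : Mor SC Cc')
      (d : E Cc A) (d' : E Cc' A') (dd : E SC SA)
      (x : Mor A B) (y : Mor B Cc) (x' : Mor A' B') (y' : Mor B' Cc'),
      isBiprod iA iA' pA pA' -> isBiprod iB iB' pB pB' ->
      isBiprod iC iC' pC pC' ->
      pushE pA (pullE iC dd) = d -> pushE pA' (pullE iC' dd) = d' ->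
      pushE pA (pullE iC' dd) = 0 -> pushE pA' (pullE iC dd) = 0 ->
      real d x y -> real d' x' y' ->
      real dd (comp iB (comp x pA) + comp iB' (comp x' pA'))
              (comp iC (comp y pB) + comp iC' (comp y' pB'));
  ET3 : forall (A B Cc A' B' Cc' : cat) (d : E Cc A) (d' : E Cc' A')
      (x : Mor A B) (y : Mor B Cc) (x' : Mor A' B') (y' : Mor B' Cc')
      (a : Mor A A') (b : Mor B B'),
      real d x y -> real d' x' y' -> comp b x = comp x' a ->
      exists c : Mor Cc Cc', comp c y = comp y' b /\ pushE a d = pullE c d';
  ET3op : forall (A B Cc A' B' Cc' : cat) (d : E Cc A) (d' : E Cc' A')
      (x : Mor A B) (y : Mor B Cc) (x' : Mor A' B') (y' : Mor B' Cc')
      (b : Mor B B') (c : Mor Cc Cc'),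
      real d x y -> real d' x' y' -> comp y' b = comp c y ->
      exists a : Mor A A', comp b x = comp x' a /\ pushE a d = pullE c d';
  ET4 : forall (A B Cc D F : cat) (d : E D A) (d' : E F B)
      (f : Mor A B) (f' : Mor B D) (g : Mor B Cc) (g' : Mor Cc F),
      real d f f' -> real d' g g' ->
      exists (Ee : cat) (d'' : E Ee A) (h : Mor A Cc) (h' : Mor Cc Ee)
             (dm : Mor D Ee) (e : Mor Ee F),
        [/\ real d'' h h',
            h = comp g f /\ comp h' g = comp dm f' /\ comp e h' = g',
            real (pushE f' d') dm e,
            pullE dm d'' = d
          & pushE f d'' = pullE e d'];
  ET4op : forall (A B D Ee F : cat) (d : E A D) (d' : E B F)
      (f' : Mor D B) (f : Mor B A) (g' : Mor F Ee) (g : Mor Ee B),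
      real d f' f -> real d' g' g ->
      exists (Cc : cat) (d'' : E A Cc) (h' : Mor Cc Ee) (h : Mor Ee A)
             (e : Mor F Cc) (dm : Mor Cc D),
        [/\ real d'' h' h,
            h = comp f g /\ comp g h' = comp f' dm /\ comp h' e = g',
            real (pullE f' d') e dm,
            pushE dm d'' = d
          & pullE f d'' = pushE e d']
}.
Arguments pushE {e A A' Cc}.
Arguments pullE {e A Cc Cc'}.
Arguments real {e A B Cc}.

Section Sub.
Variable C : ExtriCat.

Definition projective (P : C) : Prop := forall (A : C) (d : E P A), d = 0.
Definition injective (I : C) : Prop := forall (Cc : C) (d : E Cc I), d = 0.

Definition enough_projectives : Prop :=
  forall Cc : C, exists (A P : C) (d : E Cc A) (x : Mor A P) (y : Mor P Cc),
    real d x y /\ projective P.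
Definition enough_injectives : Prop :=
  forall A : C, exists (I Cc : C) (d : E Cc A) (x : Mor A I) (y : Mor I Cc),
    real d x y /\ injective I.

(* a subcategory is given by its (full) class of objects *)
Definition iso_closed (X : C -> Prop) : Prop :=
  forall (A B : C) (f : Mor A B), isIso f -> X A -> X B.

Definition subcategory (X : C -> Prop) : Prop :=
  [/\ iso_closed X, exists Z : C, isZeroObj Z /\ X Z &
      forall (A1 A2 S : C) (i1 : Mor A1 S) (i2 : Mor A2 S)
        (p1 : Mor S A1) (p2 : Mor S A2),
        isBiprod i1 i2 p1 p2 -> X A1 -> X A2 -> X S].

Definition ext_closed (X : C -> Prop) : Prop :=
  forall (A B Cc : C) (d : E Cc A) (x : Mor A B) (y : Mor B Cc),
    real d x y -> X A -> X Cc -> X B.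

Definition summand_closed (X : C -> Prop) : Prop :=
  forall (A1 A2 S : C) (i1 : Mor A1 S) (i2 : Mor A2 S)
    (p1 : Mor S A1) (p2 : Mor S A2),
    isBiprod i1 i2 p1 p2 -> X S -> X A1 /\ X A2.

Definition left_approx (X : C -> Prop) (A X0 : C) (f : Mor A X0) : Prop :=
  X X0 /\ forall (X1 : C) (g : Mor A X1), X X1 ->
    exists h : Mor X0 X1, comp h f = g.
Definition right_approx (X : C -> Prop) (A X0 : C) (f : Mor X0 A) : Prop :=
  X X0 /\ forall (X1 : C) (g : Mor X1 A), X X1 ->
    exists h : Mor X1 X0, comp f h = g.

Definition covariantly_finite (X : C -> Prop) : Prop :=
  forall A : C, exists (X0 : C) (f : Mor A X0), left_approx X f.
Definition contravariantly_finite (X : C -> Prop) : Prop :=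
  forall A : C, exists (X0 : C) (f : Mor X0 A), right_approx X f.

Definition perpL (X : C -> Prop) (Y : C) : Prop :=
  forall (X0 : C) (d : E Y X0), X X0 -> d = 0.
Definition perpR (X : C -> Prop) (Y : C) : Prop :=
  forall (X0 : C) (d : E X0 Y), X X0 -> d = 0.
End Sub.

(* Main.v *)
From HB Require Import structures.
Require Import Defs.
From mathcomp Require Import all_boot all_algebra.
From Stdlib Require Import Classical.
Set Implicit Arguments.
Unset Strict Implicit.
Unset Printing Implicit Defensive.
Import GRing.Theory.
Local Open Scope ring_scope.

Notation "g ** f" := (Defs.comp g f) (at level 40, left associativity).

Section PA.
Variable C : PreAdd.
Implicit Types A B D : C.

Lemma comp0l A B D (f : Mor A B) : (0 : Mor B D) ** f = 0.
Proof. by apply: (addrI ((0 : Mor B D) ** f)); rewrite -comp_addl !addr0. Qed.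
Lemma comp0r A B D (g : Mor B D) : g ** (0 : Mor A B) = 0.
Proof. by apply: (addrI (g ** (0 : Mor A B))); rewrite -comp_addr !addr0. Qed.
Lemma compNl A B D (g : Mor B D) (f : Mor A B) : (- g) ** f = - (g ** f).
Proof. by apply/eqP; rewrite -subr_eq0 opprK -comp_addl addNr comp0l. Qed.
Lemma compNr A B D (g : Mor B D) (f : Mor A B) : g ** (- f) = - (g ** f).
Proof. by apply/eqP; rewrite -subr_eq0 opprK -comp_addr addNr comp0r. Qed.
Lemma compBl A B D (g1 g2 : Mor B D) (f : Mor A B) : (g1 - g2) ** f = g1 ** f - g2 ** f.
Proof. by rewrite comp_addl compNl. Qed.
Lemma compBr A B D (g : Mor B D) (f1 f2 : Mor A B) : g ** (f1 - f2) = g ** f1 - g ** f2.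
Proof. by rewrite comp_addr compNr. Qed.
Lemma comp_suml A B D (I : Type) (r : seq I) (P : pred I) (G : I -> Mor B D) (f : Mor A B) :
  (\sum_(i <- r | P i) G i) ** f = \sum_(i <- r | P i) (G i ** f).
Proof.
apply: (big_morph (fun g => g ** f)); last exact: comp0l.
by move=> x y; rewrite comp_addl.
Qed.
Lemma comp_sumr A B D (I : Type) (r : seq I) (P : pred I) (g : Mor B D) (F : I -> Mor A B) :
  g ** (\sum_(i <- r | P i) F i) = \sum_(i <- r | P i) (g ** F i).
Proof.
apply: (big_morph (fun f => g ** f)); last exact: comp0r.
by move=> x y; rewrite comp_addr.
Qed.

Lemma isIso_id A : isIso (idm A).
Proof. by exists (idm A); rewrite comp_id_l. Qed.

Lemma isIso_comp A B D (g : Mor B D) (f : Mor A B) : isIso g -> isIso f -> isIso (g ** f).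
Proof.
move=> [g' [h1 h2]] [f' [h3 h4]]; exists (f' ** g'); split.
- by rewrite -comp_assoc (comp_assoc g') h1 comp_id_l.
- by rewrite -comp_assoc (comp_assoc f) h4 comp_id_l.
Qed.

End PA.

Section Local.
Variable C : PreAdd.
Implicit Types A B D L : C.

Lemma iso_inv A B (f : Mor A B) (g : Mor B A) : g ** f = idm A -> f ** g = idm B -> isIso g.
Proof. by move=> h1 h2; exists f. Qed.

Lemma local_ne0 L : localEnd L -> idm L <> 0. Proof. by case. Qed.

Lemma idem_cases L (t : Mor L L) : localEnd L -> t ** t = t -> t = idm L \/ t = 0.
Proof.
move=> [_ hL] htt; case: (hL t) => [[v [hv _]]|[v [hv _]]].
- left; have : v ** (t ** t) = v ** t by rewrite htt.
  by rewrite comp_assoc hv comp_id_l.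
- right; have e : (idm L - t) ** t = 0 by rewrite compBl htt comp_id_l subrr.
  by rewrite -[t]comp_id_l -hv -comp_assoc e comp0r.
Qed.

Lemma split_mono_iso L L' (g : Mor L L') (h : Mor L' L) :
  localEnd L -> localEnd L' -> h ** g = idm L -> isIso g.
Proof.
move=> hL hL' hg; have htt : (g ** h) ** (g ** h) = g ** h.
  by rewrite -comp_assoc (comp_assoc h) hg comp_id_l.
case: (idem_cases hL' htt) => ht.
- by exists h.
- exfalso; apply: (local_ne0 hL).
  have eg : g = (g ** h) ** g by rewrite -comp_assoc hg comp_id_r.
  by rewrite -hg eg ht comp0l comp0r.
Qed.

Lemma split_epi_iso L L' (g : Mor L L') (s : Mor L' L) :
  localEnd L -> localEnd L' -> g ** s = idm L' -> isIso g.
Proof.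
move=> hL hL' hg; have [s' [h1 h2]] := split_mono_iso hL' hL hg.
have -> : g = s'.
  by rewrite -[g]comp_id_r -h2 comp_assoc hg comp_id_l.
by exists s.
Qed.

Lemma nonIso_1sub L (g : Mor L L) : localEnd L -> ~ isIso g -> isIso (idm L - g).
Proof. by move=> [_ h] ng; case: (h g). Qed.

Lemma nonIso_add L L' (g1 g2 : Mor L L') : localEnd L -> localEnd L' ->
  ~ isIso g1 -> ~ isIso g2 -> ~ isIso (g1 + g2).
Proof.
move=> hL hL' n1 n2 [v [hv _]].
rewrite comp_addr in hv.
case: (hL.2 (v ** g1)) => [[w [hw _]]|[w [hw _]]].
- apply: n1; apply: (split_mono_iso (h := w ** v)) => //.
  by rewrite -comp_assoc.
- apply: n2; apply: (split_mono_iso (h := w ** v)) => //.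
  have e : idm L - v ** g1 = v ** g2 by rewrite -hv addrC addKr.
  by rewrite -comp_assoc -hw e.
Qed.

Lemma nonIso_0 L L' : localEnd L -> ~ isIso (0 : Mor L L').
Proof. by move=> hL [v [hv _]]; apply: (local_ne0 hL); rewrite -hv comp0r. Qed.

Lemma nonIso_opp L L' (g : Mor L L') : ~ isIso g -> ~ isIso (- g).
Proof.
move=> ng [v [h1 h2]]; apply: ng; exists (- v).
by rewrite compNl -compNr h1 compNr -compNl h2.
Qed.

Lemma nonIso_sum L L' (I : Type) (r : seq I) (P : pred I) (G : I -> Mor L L') :
  localEnd L -> localEnd L' -> (forall i, P i -> ~ isIso (G i)) ->
  ~ isIso (\sum_(i <- r | P i) G i).
Proof.
move=> hL hL' hG; apply: (big_ind (fun g : Mor L L' => ~ isIso g)) => //.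
- exact: nonIso_0.
- by move=> x y; apply: nonIso_add.
Qed.

Lemma nonIso_compl L L' L'' (h : Mor L' L'') (g : Mor L L') :
  localEnd L -> localEnd L' -> ~ isIso g -> ~ isIso (h ** g).
Proof.
move=> hL hL' ng [v [hv _]]; apply: ng; apply: (split_mono_iso (h := v ** h)) => //.
by rewrite -comp_assoc.
Qed.

Lemma nonIso_compr L L' L'' (g : Mor L' L'') (h : Mor L L') :
  localEnd L' -> localEnd L'' -> ~ isIso g -> ~ isIso (g ** h).
Proof.
move=> hL' hL'' ng [v [_ hv]]; apply: ng; apply: (split_epi_iso (s := h ** v)) => //.
by rewrite comp_assoc.
Qed.

End Local.

Section Schur.
Variable R : pzRingType.

Lemma schur (e f x a' s' : R) :
  e * e = e -> f * f = f -> e * f = 0 -> f * e = 0 ->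
  (e + f) * x = x -> x * (e + f) = x ->
  e * a' = a' -> a' * e = a' -> (e * x * e) * a' = e -> a' * (e * x * e) = e ->
  f * s' = s' -> s' * f = s' ->
  (f * x * f - (f * x * e) * a' * (e * x * f)) * s' = f ->
  exists z, x * z = e + f.
Proof.
move=> ee ff ef fe ux xu ea ae aa' a'a fs sf ss.
set u := e + f in ux xu *.
set a := e * x * e in aa' a'a.
set b := e * x * f.
set c := f * x * e.
set d := f * x * f.
set s := d - c * a' * b in ss.
have ue : u * e = e by rewrite mulrDl ee fe addr0.
have eu : e * u = e by rewrite mulrDr ee ef addr0.
have uf : u * f = f by rewrite mulrDl ef ff add0r.
have fu : f * u = f by rewrite mulrDr fe ff add0r.
have uu : u * u = u by rewrite mulrDl eu fu.
have fa' : f * a' = 0 by rewrite -ea mulrA fe mul0r.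
have a'f : a' * f = 0 by rewrite -ae -mulrA ef mulr0.
have ua' : u * a' = a' by rewrite mulrDl ea fa' addr0.
have a'u : a' * u = a' by rewrite mulrDr ae a'f addr0.
have ba' : b * a' = 0 by rewrite /b -mulrA fa' mulr0.
have a'c : a' * c = 0 by rewrite /c !mulrA a'f !mul0r.
have eb : e * b = b by rewrite /b !mulrA ee.
have ce : c * e = c by rewrite /c -!mulrA ee.
have sf' : s * f = s by rewrite /s mulrBl /d /b -!mulrA ff.
have as' : a * s' = 0 by rewrite /a -fs mulrA -(mulrA _ e f) ef mulr0 mul0r.
have sa' : s * a' = 0 by rewrite -sf' -mulrA fa' mulr0.
have xdec : x = a + b + c + d.
  transitivity (u * x * u); first by rewrite -mulrA xu ux.
  by rewrite /a /b /c /d /u !mulrDr !mulrDl addrACA !addrA.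
have ua : u * a = a by rewrite /a !mulrA ue.
have us : u * s = s by rewrite /s /d /b /c mulrBr !mulrA uf.
have cas : c * a' * s = 0.
  by rewrite /s /d /b mulrBr !mulrA -(mulrA c a' f) a'f !mulr0 !mul0r subrr.
have au : a * u = a by rewrite /a -!mulrA eu.
have su : s * u = s by rewrite -sf' -mulrA fu.
have cu : c * u = c by rewrite /c -!mulrA eu.
have bu : b * u = b by rewrite /b -!mulrA fu.
have uc : u * c = c by rewrite /c !mulrA uf.
have sdef : s = d - c * a' * b by [].
have udef : u = e + f by [].
clearbody s a b c d u.
have h1 : (u + c * a') * (a + s) = a + s + c.
  rewrite mulrDl mulrDr ua us mulrDr -(mulrA c a' a) a'a ce cas.
  by rewrite addr0.
have xLDU : x = (u + c * a') * (a + s) * (u + a' * b).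
  have h2 : (a + s + c) * u = a + s + c by rewrite !mulrDl au su cu.
  have h3 : (a + s + c) * (a' * b) = b + c * a' * b.
    by rewrite !mulrDl !mulrA aa' eb sa' mul0r addr0.
  rewrite h1 mulrDr h2 h3 xdec sdef.
  rewrite -!addrA; congr (_ + _).
  have -> : c + (b + c * a' * b) = (b + c) + c * a' * b by rewrite addrCA addrA.
  by rewrite (addrC (- _)) addrK addrA addrC.
exists ((u - a' * b) * (a' + s') * (u - c * a')).
have UL : (u + a' * b) * (u - a' * b) = u.
  rewrite mulrDl !mulrBr uu.
  have -> : u * (a' * b) = a' * b by rewrite mulrA ua'.
  have -> : a' * b * u = a' * b by rewrite -mulrA bu.
  have -> : a' * b * (a' * b) = 0 by rewrite mulrA -(mulrA a' b a') ba' mulr0 mul0r.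
  by rewrite subr0 subrK.
have DD : (a + s) * (a' + s') = u.
  by rewrite mulrDl !mulrDr aa' as' sa' ss addr0 add0r udef.
have LU : (u + c * a') * (u - c * a') = u.
  rewrite mulrDl !mulrBr uu.
  have -> : u * (c * a') = c * a' by rewrite mulrA uc.
  have -> : c * a' * u = c * a' by rewrite -mulrA a'u.
  by rewrite -mulrA (mulrA a' c) a'c mul0r mulr0 subr0 subrK.
rewrite {1}xLDU.
rewrite -!mulrA (mulrA (u + a' * b)) UL.
have -> : u * ((a' + s') * (u - c * a')) = (a' + s') * (u - c * a').
  have uD : u * (a' + s') = a' + s' by rewrite mulrDr ua' -fs mulrA uf.
  by rewrite mulrA uD.
have Lu : (u + c * a') * u = u + c * a' by rewrite mulrDl uu -mulrA a'u.
by rewrite !mulrA -(mulrA (u + c * a') (a + s)) DD Lu LU.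
Qed.

End Schur.

Definition EndT (C : PreAdd) (X : C) : Type := Mor X X.
HB.instance Definition _ (C : PreAdd) (X : C) := GRing.Zmodule.on (EndT X).
HB.instance Definition _ (C : PreAdd) (X : C) :=
  GRing.Zmodule_isPzRing.Build (EndT X) (@comp_assoc C X X X X)
    (@comp_id_l C X X) (@comp_id_r C X X) (@comp_addl C X X X) (@comp_addr C X X X).

Section Fam.
Variable C : PreAdd.

Definition pfam (X : C) n (L : 'I_n -> C) (i : forall k, Mor (L k) X)
  (p : forall k, Mor X (L k)) : Prop :=
  [/\ forall k, localEnd (L k), forall k, p k ** i k = idm (L k) &
      forall j k, j != k -> p j ** i k = 0].

Definition usum (X : C) n (L : 'I_n -> C) (i : forall k, Mor (L k) X)
  (p : forall k, Mor X (L k)) : Mor X X := \sum_(k < n) i k ** p k.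

Section OneFam.
Variables (X : C) (n : nat) (L : 'I_n -> C) (i : forall k, Mor (L k) X)
  (p : forall k, Mor X (L k)).
Hypothesis hf : pfam i p.

Lemma pfam_pu k : p k ** usum i p = p k.
Proof.
case: hf => _ h1 h2.
rewrite /usum comp_sumr (bigD1 k) //= comp_assoc h1 comp_id_l big1 ?addr0 //.
move=> j hj; rewrite comp_assoc h2 ?comp0l //; by rewrite eq_sym.
Qed.

Lemma pfam_ui k : usum i p ** i k = i k.
Proof.
case: hf => _ h1 h2.
rewrite /usum comp_suml (bigD1 k) //= -comp_assoc h1 comp_id_r big1 ?addr0 //.
move=> j hj; rewrite -comp_assoc h2 ?comp0r //.
Qed.

Lemma pfam_uu : usum i p ** usum i p = usum i p.
Proof.
by rewrite {1}/usum comp_suml; apply: eq_bigr => k _; rewrite -comp_assoc pfam_pu.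
Qed.

End OneFam.

Lemma RInv n : forall (X : C) (L : 'I_n -> C) (i : forall k, Mor (L k) X)
  (p : forall k, Mor X (L k)), pfam i p ->
  forall psi : Mor X X, (forall j k, ~ isIso (p k ** psi ** i j)) ->
  exists z, (usum i p - usum i p ** psi ** usum i p) ** z = usum i p.
Proof.
elim: n => [|n IH] X L i p hf psi hrad.
  exists 0; rewrite comp0r /usum big_ord0 //.
have [hloc h1 h2] := hf.
pose L' := fun k : 'I_n => L (lift ord0 k).
pose i' := fun k : 'I_n => i (lift ord0 k).
pose p' := fun k : 'I_n => p (lift ord0 k).
have hf' : pfam i' p'.
  split => //; move=> j k hjk; apply: h2; by rewrite (inj_eq (@lift_inj _ ord0)).
set u := usum i p.
set f := usum i' p'.
set e := i ord0 ** p ord0.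
have uef : u = e + f by rewrite /u /usum big_ord_recl.
have p0f : p ord0 ** f = 0.
  rewrite /f /usum comp_sumr big1 // => j _; rewrite comp_assoc h2 ?comp0l //.
have fi0 : f ** i ord0 = 0.
  rewrite /f /usum comp_suml big1 // => j _; rewrite -comp_assoc h2 ?comp0r //.
set g := p ord0 ** psi ** i ord0.
have [w [hw1 hw2]] : isIso (idm _ - g) := nonIso_1sub (hloc ord0) (hrad ord0 ord0).
set a' := i ord0 ** w ** p ord0.
set psi2 := psi + psi ** a' ** psi.
have hrad' : forall j k, ~ isIso (p' k ** psi2 ** i' j).
  move=> j k.
  have -> : p' k ** psi2 ** i' j =
     p' k ** psi ** i' j + (p' k ** psi ** i ord0 ** w) ** (p ord0 ** psi ** i' j).
    by rewrite /psi2 /a' comp_addr comp_addl !comp_assoc.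
  apply: nonIso_add; try exact: hloc; first exact: hrad.
  apply: nonIso_compl; try exact: hloc; exact: hrad.
have [s'' hs''] := IH X L' i' p' hf' psi2 hrad'.
pose R := EndT X.
have ee_c : e ** e = e.
  by rewrite /e !comp_assoc -(comp_assoc _ (p ord0) (i ord0)) h1 comp_id_r.
have ff_c : f ** f = f := pfam_uu hf'.
have ef_c : e ** f = 0 by rewrite /e -comp_assoc p0f comp0r.
have fe_c : f ** e = 0 by rewrite /e comp_assoc fi0 comp0l.
have uu_c : u ** u = u := pfam_uu hf.
have eu_c : e ** u = e by rewrite /e -comp_assoc pfam_pu.
have ue_c : u ** e = e by rewrite /e comp_assoc pfam_ui.
have ea_c : e ** a' = a'.
  by rewrite /e /a' !comp_assoc -(comp_assoc _ (p ord0) (i ord0)) h1 comp_id_r.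
have ae_c : a' ** e = a'.
  by rewrite /e /a' !comp_assoc -(comp_assoc _ (p ord0) (i ord0)) h1 comp_id_r.
have ee : (e : R) * e = e := ee_c.
have ff : (f : R) * f = f := ff_c.
have ef : (e : R) * f = 0 := ef_c.
have fe : (f : R) * e = 0 := fe_c.
have uu : (u : R) * u = u := uu_c.
have eu : (e : R) * u = e := eu_c.
have ue : (u : R) * e = e := ue_c.
have ea : (e : R) * a' = a' := ea_c.
have ae : (a' : R) * e = a' := ae_c.
have fu : (f : R) * u = f by rewrite uef mulrDr fe ff add0r.
have uf : (u : R) * f = f by rewrite uef mulrDl ef ff add0r.
set x : R := u - u ** psi ** u.
have xdef : x = (u : R) - (u : R) * psi * u by [].
have exe : (e : R) * x * e = i ord0 ** (idm _ - g) ** p ord0.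
  transitivity ((e : R) - (e : R) * psi * e).
    by rewrite xdef mulrBr mulrBl eu ee !mulrA eu -(@mulrA R _ u e) ue.
  rewrite /g compBr compBl comp_id_r.
  change (e - e ** psi ** e = i ord0 ** p ord0 - i ord0 ** (p ord0 ** psi ** i ord0) ** p ord0).
  by rewrite /e !comp_assoc.
pose s' := f ** s'' ** f.
have schur_s : (f : R) * x * f - ((f : R) * x * e) * a' * ((e : R) * x * f) = (f : R) - (f : R) * psi2 * f.
  have fx : (f : R) * x = (f : R) - (f : R) * psi * u by rewrite xdef mulrBr fu !mulrA fu.
  have ex : (e : R) * x = (e : R) - (e : R) * psi * u by rewrite xdef mulrBr eu !mulrA eu.
  have fxf : (f : R) * x * f = (f : R) - (f : R) * psi * f by rewrite fx mulrBl ff -(@mulrA R ((f : R) * psi) u f) uf.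
  have fxe : (f : R) * x * e = - ((f : R) * psi * e) by rewrite fx mulrBl fe -(@mulrA R ((f : R) * psi) u e) ue sub0r.
  have exf : (e : R) * x * f = - ((e : R) * psi * f) by rewrite ex mulrBl ef -(@mulrA R ((e : R) * psi) u f) uf sub0r.
  rewrite fxf fxe exf mulrN !mulNr opprK.
  rewrite /psi2 mulrDr mulrDl !mulrA -(@mulrA R ((f : R) * psi) e a') ea -(@mulrA R ((f : R) * psi) a' e) ae.
  by rewrite opprD addrA.
have hs : ((f : R) - (f : R) * psi2 * f) * s'' = f := hs''.
have [z hz] := @schur R e f x a' s' ee ff ef fe
  ltac:(by rewrite -uef xdef mulrBr !mulrA uu)
  ltac:(by rewrite -uef xdef mulrBl -(@mulrA R ((u : R) * psi) u u) uu)
  ea ae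
  ltac:(rewrite exe; change (i ord0 ** (idm _ - g) ** p ord0 ** a' = e);
        by rewrite /a' /e !comp_assoc -(comp_assoc _ (p ord0) (i ord0)) h1 comp_id_r
           -(comp_assoc (i ord0) (idm _ - g) w) hw2 comp_id_r)
  ltac:(rewrite exe; change (a' ** (i ord0 ** (idm _ - g) ** p ord0) = e);
        by rewrite /a' /e !comp_assoc -(comp_assoc _ (p ord0) (i ord0)) h1 comp_id_r
           -(comp_assoc (i ord0) w (idm _ - g)) hw1 comp_id_r)
  ltac:(change (f ** (f ** s'' ** f) = f ** s'' ** f); by rewrite !comp_assoc ff_c)
  ltac:(change (f ** s'' ** f ** f = f ** s'' ** f); by rewrite -comp_assoc ff_c)
  ltac:(by rewrite schur_s /s' !mulrA mulrBl -(@mulrA R ((f : R) * psi2) f f) ff hs ff).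
by exists z; rewrite uef -hz.
Qed.

End Fam.

Section Build.
Variable C : PreAdd.

Lemma Iso_crit (X : C) n (L : 'I_n -> C) (i : forall k, Mor (L k) X)
  (p : forall k, Mor X (L k)) : pfam i p -> usum i p = idm X ->
  forall psi : Mor X X, (forall j k, ~ isIso (p k ** psi ** i j)) -> isIso (idm X - psi).
Proof.
move=> hf hu psi hrad.
have [z hz] := RInv hf hrad.
rewrite hu comp_id_l comp_id_r in hz.
have [hloc h1 h2] := hf.
have hrad2 : forall j k, ~ isIso (p k ** (- (psi ** z)) ** i j).
  move=> j k.
  have -> : p k ** (- (psi ** z)) ** i j = - \sum_(m < n) (p k ** psi ** i m) ** (p m ** z ** i j).
    rewrite compNr compNl; congr (- _).
    have -> : psi ** z = psi ** usum i p ** z by rewrite hu comp_id_r.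
    rewrite /usum comp_sumr comp_suml comp_sumr comp_suml; apply: eq_bigr => m _.
    by rewrite !comp_assoc.
  apply: nonIso_opp; apply: nonIso_sum => // m _.
  by apply: nonIso_compr => //; apply: hrad.
have [z' hz'] := RInv hf hrad2.
rewrite hu comp_id_l comp_id_r opprK in hz'.
have ez : idm X + psi ** z = z by rewrite -hz compBl comp_id_l subrK.
rewrite ez in hz'.
have ex : idm X - psi = z'.
  transitivity ((idm X - psi) ** (z ** z')); first by rewrite hz' comp_id_r.
  by rewrite comp_assoc hz comp_id_l.
by exists z; split => //; rewrite ex.
Qed.

Definition castm n (L : 'I_n -> C) (k m : 'I_n) : Mor (L k) (L m) :=
  match k =P m with
  | ReflectT e => eq_rect k (fun t => Mor (L k) (L t)) (idm (L k)) m e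
  | ReflectF _ => 0
  end.

Lemma castm_id n (L : 'I_n -> C) k : castm L k k = idm (L k).
Proof. rewrite /castm; case: (k =P k) => [e|] //; by rewrite (eq_axiomK e). Qed.

Lemma castm_neq n (L : 'I_n -> C) k m : k != m -> castm L k m = 0.
Proof. move=> h; rewrite /castm; case: (k =P m) => [e|] //; by rewrite e eqxx in h. Qed.

Lemma bigprod (hadd : Defs.additive C) n : forall L : 'I_n -> C,
  exists (S : C) (i : forall k, Mor (L k) S) (p : forall k, Mor S (L k)),
  [/\ forall k, p k ** i k = idm (L k), forall j k, j != k -> p j ** i k = 0
    & usum i p = idm S].
Proof.
elim: n => [|n IH] L.
  have [[Z hZ] _] := hadd.
  exists Z, (fun k => 0), (fun k => 0); split; try by case.
  by rewrite /usum big_ord0 hZ.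
have [S' [i' [p' [c1 c2 c3]]]] := IH (fun k => L (lift ord0 k)).
have [S [j1 [j2 [q1 [q2 [b1 b2 b3 b4 b5]]]]]] := hadd.2 (L ord0) S'.
pose i := fun k => j1 ** castm L k ord0 +
   j2 ** \sum_(m < n) (i' m ** castm L k (lift ord0 m)).
pose p := fun k => castm L ord0 k ** q1 +
   \sum_(m < n) (castm L (lift ord0 m) k ** p' m ** q2).
have i0 : i ord0 = j1.
  rewrite /i castm_id comp_id_r big1 ?comp0r ?addr0 // => m _.
  by rewrite castm_neq ?comp0r // neq_lift.
have p0 : p ord0 = q1.
  rewrite /p castm_id comp_id_l big1 ?addr0 // => m _.
  by rewrite castm_neq ?comp0l // eq_sym neq_lift.
have iL : forall k, i (lift ord0 k) = j2 ** i' k.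
  move=> k; rewrite /i castm_neq ?comp0r ?add0r; last by rewrite eq_sym neq_lift.
  rewrite (bigD1 k) //= castm_id comp_id_r big1 ?addr0 // => m hm.
  by rewrite castm_neq ?comp0r // (inj_eq (@lift_inj _ ord0)) eq_sym.
have pL : forall k, p (lift ord0 k) = p' k ** q2.
  move=> k; rewrite /p castm_neq ?comp0l ?add0r; last by rewrite neq_lift.
  rewrite (bigD1 k) //= castm_id comp_id_l big1 ?addr0 // => m hm.
  by rewrite castm_neq ?comp0l ?comp0r // (inj_eq (@lift_inj _ ord0)).
exists S, i, p; split.
- move=> k; case: (unliftP ord0 k) => [k' ->|->].
    by rewrite iL pL -comp_assoc (comp_assoc q2) b2 comp_id_l c1.
  by rewrite i0 p0 b1.
- move=> j k; case: (unliftP ord0 j) => [j' ->|->]; case: (unliftP ord0 k) => [k' ->|->].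
  + rewrite (inj_eq (@lift_inj _ ord0)) => h.
    by rewrite iL pL -comp_assoc (comp_assoc q2) b2 comp_id_l c2.
  + by rewrite i0 pL -comp_assoc b4 comp0r.
  + by rewrite iL p0 comp_assoc b3 comp0l.
  + by rewrite eqxx.
- rewrite /usum big_ord_recl i0 p0 -b5; congr (_ + _).
  transitivity (j2 ** usum i' p' ** q2); last by rewrite c3 comp_id_r.
  rewrite /usum comp_sumr comp_suml; apply: eq_bigr => m _.
  by rewrite iL pL !comp_assoc.
Qed.

End Build.

Section Split.
Variable C : PreAdd.

Lemma split_off (hadd : Defs.additive C) (X : C) n (L : 'I_n.+1 -> C)
  (i : forall k, Mor (L k) X) (p : forall k, Mor X (L k)) :
  pfam i p -> usum i p = idm X -> forall j : 'I_n.+1,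
  exists (X1 : C) (q : forall m : 'I_n, Mor (L (lift j m)) X1)
    (r : forall m : 'I_n, Mor X1 (L (lift j m))) (i1 : Mor X1 X) (p1 : Mor X X1),
    [/\ pfam q r, usum q r = idm X1 & isBiprod i1 (i j) p1 (p j)].
Proof.
move=> [hloc h1 h2] hu j.
have [X1 [q [r [c1 c2 c3]]]] := bigprod hadd (fun m : 'I_n => L (lift j m)).
pose i1 := \sum_(m < n) i (lift j m) ** r m.
pose p1 := \sum_(m < n) q m ** p (lift j m).
have rp : forall m, p (lift j m) ** i1 = r m.
  move=> m; rewrite /i1 comp_sumr (bigD1 m) //= comp_assoc h1 comp_id_l big1 ?addr0 //.
  move=> m' hm; rewrite comp_assoc h2 ?comp0l //.
  by rewrite (inj_eq (@lift_inj _ j)) eq_sym.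
have rp1 : forall m, r m ** p1 = p (lift j m).
  move=> m; rewrite /p1 comp_sumr (bigD1 m) //= comp_assoc c1 comp_id_l big1 ?addr0 //.
  move=> m' hm; rewrite comp_assoc c2 ?comp0l //.
  by rewrite eq_sym.
exists X1, q, r, i1, p1; split => //.
split.
- rewrite /p1 comp_suml -c3; apply: eq_bigr => m _; by rewrite -comp_assoc rp.
- exact: h1.
- rewrite /p1 comp_suml big1 // => m _; rewrite -comp_assoc h2 ?comp0r //.
  by rewrite eq_sym; exact: neq_lift.
- rewrite /i1 comp_sumr big1 // => m _; rewrite comp_assoc h2 ?comp0l //.
  exact: neq_lift.
- rewrite -hu /usum (bigD1_ord j) //= addrC; congr (_ + _).
  rewrite /i1 comp_suml; apply: eq_bigr => m _; by rewrite -comp_assoc rp1.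
Qed.

End Split.

Section Extri.
Variable C : ExtriCat.
Implicit Types A B D K T W Z Cc P I F : C.

Lemma pushE0 A A' Z (a : Mor A A') : pushE a (0 : E Z A) = 0.
Proof. by apply: (addrI (pushE a (0 : E Z A))); rewrite -pushE_add !addr0. Qed.
Lemma pullE0 A Z Z' (c : Mor Z' Z) : pullE c (0 : E Z A) = 0.
Proof. by apply: (addrI (pullE c (0 : E Z A))); rewrite -pullE_add !addr0. Qed.

Lemma biprod_ex A1 A2 : exists (S : C) (i1 : Mor A1 S) (i2 : Mor A2 S)
      (p1 : Mor S A1) (p2 : Mor S A2), isBiprod i1 i2 p1 p2.
Proof. exact: (cat_additive C).2. Qed.

Lemma lift_defl K W Z T (eps : E Z K) (u : Mor K W) (v : Mor W Z) (g : Mor T Z) :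
  real eps u v -> pullE g eps = 0 -> exists t : Mor T W, v ** t = g.
Proof.
move=> hr hg.
have [S [i1 [i2 [p1 [p2 hb]]]]] := biprod_ex K T.
have hz := real_zero hb.
have [b [_ hb2]] := real_morph (a := idm K) (c := g) hz hr
  ltac:(by rewrite pushE_id hg).
exists (b ** i2); rewrite comp_assoc hb2 -comp_assoc.
by case: hb => _ -> _ _ _; rewrite comp_id_r.
Qed.

Lemma ext_infl K W Z T (eps : E Z K) (u : Mor K W) (v : Mor W Z) (g : Mor K T) :
  real eps u v -> pushE g eps = 0 -> exists t : Mor W T, t ** u = g.
Proof.
move=> hr hg.
have [S [i1 [i2 [p1 [p2 hb]]]]] := biprod_ex T Z.
have hz := real_zero hb.
have [b [hb1 _]] := real_morph (a := g) (c := idm Z) hr hz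
  ltac:(by rewrite hg pullE_id).
exists (p1 ** b); rewrite -comp_assoc hb1 comp_assoc.
by case: hb => -> _ _ _ _; rewrite comp_id_l.
Qed.

Lemma push_self A B Z (d : E Z A) (x : Mor A B) (y : Mor B Z) :
  real d x y -> pushE x d = 0.
Proof.
move=> hr.
have [S [i1 [i2 [p1 [p2 hb]]]]] := biprod_ex B Z.
have hz := real_zero hb.
have [c [_ hc]] := ET3 (a := x) (b := i1) hr hz erefl.
by rewrite hc pullE0.
Qed.

Lemma pull_self A B Z (d : E Z A) (x : Mor A B) (y : Mor B Z) :
  real d x y -> pullE y d = 0.
Proof.
move=> hr.
have [S [i1 [i2 [p1 [p2 hb]]]]] := biprod_ex A B.
have hz := real_zero hb.
have [a [_ ha]] := ET3op (b := p2) (c := y) hz hr erefl.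
by rewrite -ha pushE0.
Qed.

Lemma split_retr F D Cc (e : Mor F Cc) (dm : Mor Cc D) :
  real (0 : E D F) e dm -> exists r : Mor Cc F, r ** e = idm F.
Proof.
move=> hr.
have [S [i1 [i2 [p1 [p2 hb]]]]] := biprod_ex F D.
have hz := real_zero hb.
have [b [[b' [hb'1 hb'2]] [hbi _]]] := (real_equiv e dm hz).1 hr.
exists (p1 ** b'); rewrite -hbi -comp_assoc (comp_assoc b') hb'1 comp_id_l.
by case: hb.
Qed.

Lemma split_sect F D Cc (e : Mor F Cc) (dm : Mor Cc D) :
  real (0 : E D F) e dm -> exists s : Mor D Cc, dm ** s = idm D.
Proof.
move=> hr.
have [S [i1 [i2 [p1 [p2 hb]]]]] := biprod_ex F D.
have hz := real_zero hb.
have [b [_ [_ hbp]]] := (real_equiv e dm hz).1 hr.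
exists (b ** i2); rewrite comp_assoc hbp.
by case: hb.
Qed.

Lemma exact_pull (X0 Y0 Cc X' : C) (th : E Cc X0) (x : Mor X0 Y0) (y : Mor Y0 Cc)
  (eps : E Y0 X') : real th x y -> pullE x eps = 0 ->
  exists ze : E Cc X', eps = pullE y ze.
Proof.
move=> hr h0.
have [B [u [v huv]]] := real_ex eps.
have [Cc' [d'' [h' [h [e [dm [hd'' _ hre _ hpe]]]]]]] := ET4op hr huv.
rewrite h0 in hre.
have [r hr'] := split_retr hre.
exists (pushE r d''); rewrite -push_pullE hpe -pushE_comp hr' pushE_id //.
Qed.

Lemma exact_push (X0 Y0 Cc Y' : C) (th : E Y0 Cc) (x : Mor Cc X0) (y : Mor X0 Y0)
  (eps : E Y' X0) : real th x y -> pushE y eps = 0 ->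
  exists ze : E Y' Cc, eps = pushE x ze.
Proof.
move=> hr h0.
have [B [u [v huv]]] := real_ex eps.
have [Ee [d'' [h [h' [dm [e [hd'' _ hre _ hpe]]]]]]] := ET4 hr huv.
rewrite h0 in hre.
have [s hs] := split_sect hre.
exists (pullE s d''); rewrite push_pullE hpe -pullE_comp hs pullE_id //.
Qed.

Lemma exact_conn (A P Cc X' : C) (de : E Cc A) (x : Mor A P) (y : Mor P Cc)
  (ze : E Cc X') : real de x y -> pullE y ze = 0 ->
  exists w : Mor A X', ze = pushE w de.
Proof.
move=> hr h0.
have [W [u [v huv]]] := real_ex ze.
have [t ht] := lift_defl huv h0.
have [a [_ ha]] := ET3op (b := t) (c := idm Cc) hr huv ltac:(by rewrite ht comp_id_l).
by exists a; rewrite ha pullE_id.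
Qed.

Lemma exact_conn' (I B Cc Y' : C) (de : E B Cc) (x : Mor Cc I) (y : Mor I B)
  (ze : E Y' Cc) : real de x y -> pushE x ze = 0 ->
  exists w : Mor Y' B, ze = pullE w de.
Proof.
move=> hr h0.
have [W [u [v huv]]] := real_ex ze.
have [t ht] := ext_infl huv h0.
have [c [_ hc]] := ET3 (a := idm Cc) (b := t) huv hr ltac:(by rewrite ht comp_id_r).
by exists c; rewrite -hc pushE_id.
Qed.

End Extri.

Section Good.
Variable C : ExtriCat.

Lemma bad_decomp (X0 : C) n (L : 'I_n -> C) (i : forall k, Mor (L k) X0)
  (p : forall k, Mor X0 (L k)) : pfam i p -> usum i p = idm X0 ->
  forall phi : Mor X0 X0, ~ isIso phi ->
  exists j k, isIso (p k ** (idm X0 - phi) ** i j).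
Proof.
move=> hf hu phi hn; apply: NNPP => hne; apply: hn.
have hrad : forall j k, ~ isIso (p k ** (idm X0 - phi) ** i j).
  by move=> j k hi; apply: hne; exists j, k.
have := Iso_crit hf hu hrad.
by rewrite opprB addrC subrK.
Qed.

Lemma good_left (hKS : KrullSchmidt C) (X : C -> Prop) :
  summand_closed X -> covariantly_finite X -> forall A : C,
  exists (X0 : C) (a : Mor A X0), left_approx X a /\
    forall phi : Mor X0 X0, phi ** a = a -> isIso phi.
Proof.
move=> hsum hcov A.
have [X0 [a ha]] := hcov A.
have [n [L [i [p [hl h1 h2 hs]]]]] := hKS X0.
have hf : pfam i p by split.
have hu : usum i p = idm X0 by [].
clear hl h1 h2 hs.
elim: n X0 L i p a ha hf hu => [|n IH] X0 L i p a ha hf hu.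
- case: (classic (forall phi : Mor X0 X0, phi ** a = a -> isIso phi)) => hg.
    by exists X0, a.
  have [phi hphi2] := not_all_ex_not _ _ hg.
  have [hphi hni] := imply_to_and _ _ hphi2.
  by have [[]] := bad_decomp hf hu hni.
- case: (classic (forall phi : Mor X0 X0, phi ** a = a -> isIso phi)) => hg.
    by exists X0, a.
  have [phi hphi2] := not_all_ex_not _ _ hg.
  have [hphi hni] := imply_to_and _ _ hphi2.
  have [j [k [w [hw1 hw2]]]] := bad_decomp hf hu hni.
  set e := w ** p k ** (idm X0 - phi).
  have ei : e ** i j = idm _ by rewrite /e -hw1 !comp_assoc.
  have ea : e ** a = 0 by rewrite /e -comp_assoc compBl comp_id_l hphi subrr comp0r.
  clearbody e.
  have [X1 [q [r [i1 [p1 [hfq huq hb]]]]]] := split_off (cat_additive C) hf hu j.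
  have hv : (i1 - i j ** e ** i1) ** (p1 ** a) = a.
    have [_ _ _ _ b5] := hb.
    have hP : i1 ** p1 = idm X0 - i j ** p j by rewrite -b5 addrK.
    rewrite comp_assoc compBl -(comp_assoc (i j ** e) i1 p1) hP compBr comp_id_r.
    rewrite !comp_assoc -(comp_assoc (i j) e (i j)) ei comp_id_r.
    rewrite opprB -addrA addKr compBl comp_id_l -comp_assoc ea comp0r subr0 //.
  apply: (IH X1 _ q r (p1 ** a)) => //.
  split; first exact: (hsum _ _ _ _ _ _ _ hb ha.1).1.
  move=> X' g hX'; have [h hh] := ha.2 X' g hX'.
  by exists (h ** (i1 - i j ** e ** i1)); rewrite -comp_assoc hv.
Qed.

Lemma good_right (hKS : KrullSchmidt C) (Y : C -> Prop) :
  summand_closed Y -> contravariantly_finite Y -> forall B : C,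
  exists (Y0 : C) (a : Mor Y0 B), right_approx Y a /\
    forall phi : Mor Y0 Y0, a ** phi = a -> isIso phi.
Proof.
move=> hsum hcov B.
have [Y0 [a ha]] := hcov B.
have [n [L [i [p [hl h1 h2 hs]]]]] := hKS Y0.
have hf : pfam i p by split.
have hu : usum i p = idm Y0 by [].
clear hl h1 h2 hs.
elim: n Y0 L i p a ha hf hu => [|n IH] Y0 L i p a ha hf hu.
- case: (classic (forall phi : Mor Y0 Y0, a ** phi = a -> isIso phi)) => hg.
    by exists Y0, a.
  have [phi hphi2] := not_all_ex_not _ _ hg.
  have [hphi hni] := imply_to_and _ _ hphi2.
  by have [[]] := bad_decomp hf hu hni.
- case: (classic (forall phi : Mor Y0 Y0, a ** phi = a -> isIso phi)) => hg.
    by exists Y0, a.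
  have [phi hphi2] := not_all_ex_not _ _ hg.
  have [hphi hni] := imply_to_and _ _ hphi2.
  have [j [k [w [hw1 hw2]]]] := bad_decomp hf hu hni.
  set e := (idm Y0 - phi) ** i j ** w.
  have pe : p k ** e = idm _ by rewrite /e -hw2 !comp_assoc.
  have ae : a ** e = 0 by rewrite /e !comp_assoc compBr comp_id_r hphi subrr !comp0l.
  clearbody e.
  have [X1 [q [r [i1 [p1 [hfq huq hb]]]]]] := split_off (cat_additive C) hf hu k.
  have hv : (a ** i1) ** (p1 - p1 ** e ** p k) = a.
    have [_ _ _ _ b5] := hb.
    have hP : i1 ** p1 = idm Y0 - i k ** p k by rewrite -b5 addrK.
    rewrite -comp_assoc compBr (comp_assoc i1 (p1 ** e) (p k)) (comp_assoc i1 p1 e) hP.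
    rewrite compBl comp_id_l compBl -(comp_assoc (i k) (p k) e) pe comp_id_r.
    rewrite opprB -addrA addKr compBr comp_id_r comp_assoc ae comp0l subr0 //.
  apply: (IH X1 _ q r (a ** i1)) => //.
  split; first exact: (hsum _ _ _ _ _ _ _ hb ha.1).1.
  move=> Y' g hY'; have [h hh] := ha.2 Y' g hY'.
  by exists ((p1 - p1 ** e ** p k) ** h); rewrite comp_assoc hv.
Qed.

End Good.

Theorem corollary3p3 (C : ExtriCat) :
  KrullSchmidt C -> enough_projectives C -> enough_injectives C ->
  (forall X : C -> Prop,
     subcategory X -> covariantly_finite X -> ext_closed X -> summand_closed X ->
     forall Cc : C, exists (X0 Y0 : C) (d : E Cc X0) (x : Mor X0 Y0) (y : Mor Y0 Cc),
       [/\ real d x y, X X0, perpL X Y0 & right_approx (perpL X) y])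
  /\
  (forall Y : C -> Prop,
     subcategory Y -> contravariantly_finite Y -> ext_closed Y -> summand_closed Y ->
     forall Cc : C, exists (X0 Y0 : C) (d : E Y0 Cc) (x : Mor Cc X0) (y : Mor X0 Y0),
       [/\ real d x y, perpR Y X0, Y Y0 & left_approx (perpR Y) x]).
Proof.
move=> hKS hproj hinj; split.
- move=> X hsub hcov hext hsum Cc.
  have [A [P [de [x [y [hr hP]]]]]] := hproj Cc.
  have [X0 [a [ha hgood]]] := good_left hKS hsum hcov A.
  have [Y0 [x' [y' hr']]] := real_ex (pushE a de).
  have [b [hb1 hb2]] := real_morph (a := a) (c := idm Cc) hr hr' ltac:(by rewrite pullE_id).
  have perp : perpL X Y0.
    move=> X' eps hX'.
    have s1 : pullE x' eps = 0.
      have [W1 [u1 [v1 hr1]]] := real_ex (pullE x' eps).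
      have hW1 : X W1 := hext _ _ _ _ _ _ hr1 hX' ha.1.
      have h0 : pullE a (pullE x' eps) = 0.
        by rewrite -pullE_comp -hb1 pullE_comp (hP _ (pullE b eps)) pullE0.
      have [t ht] := lift_defl hr1 h0.
      have [h hh] := ha.2 W1 t hW1.
      have [z [hz1 hz2]] : isIso (v1 ** h).
        by apply: hgood; rewrite -comp_assoc hh ht.
      by rewrite -[pullE x' eps]pullE_id -hz2 !pullE_comp (pull_self hr1) !pullE0.
    have [ze hze] := exact_pull hr' s1.
    have hy : pullE y ze = 0 by apply: hP.
    have [w hw] := exact_conn hr hy.
    have [k hk] := ha.2 X' w hX'.
    by rewrite hze hw -hk pushE_comp -push_pullE (pull_self hr') pushE0.
  exists X0, Y0, (pushE a de), x', y'; split => //; first exact: ha.1.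
  split => // Y' g hY'.
  apply: (lift_defl hr'); exact: hY' ha.1.
- move=> Y hsub hcon hext hsum Cc.
  have [I [B [de [x [y [hr hI]]]]]] := hinj Cc.
  have [Y0 [a [ha hgood]]] := good_right hKS hsum hcon B.
  have [X0 [x' [y' hr']]] := real_ex (pullE a de).
  have [b [hb1 hb2]] := real_morph (a := idm Cc) (c := a) hr' hr ltac:(by rewrite pushE_id).
  have perp : perpR Y X0.
    move=> Y' eps hY'.
    have s1 : pushE y' eps = 0.
      have [W1 [u1 [v1 hr1]]] := real_ex (pushE y' eps).
      have hW1 : Y W1 := hext _ _ _ _ _ _ hr1 ha.1 hY'.
      have h0 : pushE a (pushE y' eps) = 0.
        by rewrite -pushE_comp -hb2 pushE_comp (hI _ (pushE b eps)) pushE0.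
      have [t ht] := ext_infl hr1 h0.
      have [h hh] := ha.2 W1 t hW1.
      have [z [hz1 hz2]] : isIso (h ** u1).
        by apply: hgood; rewrite comp_assoc hh ht.
      by rewrite -[pushE y' eps]pushE_id -hz1 !pushE_comp (push_self hr1) !pushE0.
    have [ze hze] := exact_push hr' s1.
    have hx : pushE x ze = 0 by apply: hI.
    have [w hw] := exact_conn' hr hx.
    have [k hk] := ha.2 Y' w hY'.
    by rewrite hze hw -hk pullE_comp push_pullE (push_self hr') pullE0.
  exists X0, Y0, (pullE a de), x', y'; split => //; first exact: ha.1.
  split => // X1 g hX1.
  apply: (ext_infl hr'); exact: hX1 ha.1.
Qed.
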